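(* Let $m\ge1$ and let $X\subset\sqrt{m}\,\mathbb{S}^{m-1}$ be a spherical $2$-design with $|X|=n$ which is an $s$-distance set of degree $S=s$. If $\frac1n q_i((nG)^\circ)=F_i$ for all $i\in\{0,1,\dots,s\}$, then $X$ carries a $Q$-polynomial association scheme; namely $X$ has the structure of a $Q$-polynomial association scheme with respect to the idempotents $F_0,\dots,F_s$.
   Context: $\sqrt{m}\,\mathbb{S}^{m-1}=\{\bm x\in\mathbb{R}^m:\bm x\cdot\bm x=m\}$. $A(X)=\{\bm x\cdot\bm y:\bm x\ne\bm y\in X\}$, $A'(X)=A(X)\cup\{m\}$; $s$-distance set: $|A(X)|=s$. Spherical $2$-design: the average over $X$ of every polynomial of degree $\le2$ equals its average over the sphere. $C(X)$: real functions on $X$ with $(f,g)=\frac1n\sum f g$; $\zeta_{\bm a}(p)(\bm x)=p(\bm a\cdot\bm x)$; $\mathrm{Pol}_0$ = constants, $\mathrm{Pol}_1=\mathrm{Span}\{\zeta_{\bm a}(p):\deg p\le1\}$, $\mathrm{Pol}_k=\mathrm{Span}\{fg:f\in\mathrm{Pol}_1,g\in\mathrm{Pol}_{k-1}\}$; degree $S=\min\{i:\mathrm{Pol}_i(X)=C(X)\}$; $\mathrm{Harm}_0=\mathrm{Pol}_0$, $\mathrm{Harm}_k=\mathrm{Pol}_k\cap\mathrm{Pol}_{k-1}^\perp$; $F_i$ ($0\le i\le S$) is the matrix of the orthogonal projection onto $\mathrm{Harm}_i(X)$, with $(Mf)(\bm x)=\sum_{\bm y}M_{\bm x,\bm y}f(\bm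 y)$. $G=\frac1n(\bm x\cdot\bm y)_{\bm x,\bm y}$; $p(M^\circ)$ is entrywise application of $p$. $\kappa_\alpha=|\{(\bm x,\bm y)\in X^2:\bm x\cdot\bm y=\alpha\}|$, $\langle p,q\rangle=\frac1{n^2}\sum_{\alpha\in A'(X)}\kappa_\alpha p(\alpha)q(\alpha)$; predegree polynomials $q_0,\dots,q_s$: $\deg q_k=k$, $\langle q_k,q_h\rangle=\delta_{k,h}q_k(m)$. With $R_\alpha=\{(\bm x,\bm y):\bm x\cdot\bm y=\alpha\}$, ''$X$ has the structure of a $Q$-polynomial association scheme with respect to the idempotents $F_0,\dots,F_s$'' means $(X,\{R_\alpha\}_{\alpha\in A'(X)})$ is a symmetric association scheme (the span of the adjacency matrices of the $R_\alpha$ is closed under matrix multiplication, with the standard axioms) whose primitive idempotents are $F_0,\dots,F_s$, and for each $i$ there is a polynomial $v_i^*$ of degree $i$ with $nF_i=v_i^*((nF_1)^\circ)$. *)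

(* Defs.v *)
From HB Require Import structures.
From mathcomp Require Import all_boot all_order all_algebra.
Set Implicit Arguments. Unset Strict Implicit. Unset Printing Implicit Defensive.
Import Order.TTheory GRing.Theory Num.Theory.
Local Open Scope ring_scope.

Section Defs.
Variables (R : realFieldType) (m n : nat) (x : 'I_n -> 'rV[R]_m).

Definition dot (u v : 'rV[R]_m) : R := \sum_(k < m) u 0 k * v 0 k.

Definition nG : 'M[R]_n := \matrix_(a < n, b < n) dot (x a) (x b).

Definition Aset : seq R :=
  undup [seq dot (x p.1) (x p.2) | p <- enum [pred p : 'I_n * 'I_n | p.1 != p.2]].
Definition sdist : nat := size Aset.
Definition Aset' : seq R := undup (m%:R :: Aset).

(* Spherical 2-design on sqrt(m) S^{m-1}: for every polynomial of degree <= 2,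
   p(z) = c + b.z + sum_{j,k} A_jk z_j z_k, the average over X equals the
   average over the sphere sqrt(m) S^{m-1}, which is c + tr A
   (sphere averages: z_j -> 0, z_j z_k -> delta_jk * m/m). *)
Definition sph2design : Prop :=
  forall (c : R) (b : 'rV[R]_m) (A : 'M[R]_m),
    (n%:R)^-1 * \sum_(a < n) (c + dot b (x a)
         + \sum_(j < m) \sum_(k < m) A j k * x a 0 j * x a 0 k)
    = c + \tr A.

(* Functions in C(X) are row vectors f : 'rV_n, f(x_a) = f 0 a.
   Subspaces of C(X) are represented by matrices whose rows span them. *)
Definition one_fun : 'rV[R]_n := const_mx 1.

Definition Pol1gen : 'M[R]_(1 + m, n) :=
  col_mx one_fun (\matrix_(j < m, a < n) x a 0 j).

(* Pol_0 = constants; Pol_{k+1} = span { f g : f in Pol_1, g in Pol_k }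
   (pointwise products, spanned by products of spanning vectors). *)
Fixpoint Pol (k : nat) : 'M[R]_n :=
  match k with
  | 0 => <<one_fun>>%MS
  | k'.+1 => (\sum_(i < 1 + m) \sum_(j < n)
                <<map2_mx *%R (row i Pol1gen) (row j (Pol k'))>>)%MS
  end.

Definition degree_is (S : nat) : Prop :=
  row_full (Pol S) /\ (forall i, (i < S)%N -> ~~ row_full (Pol i)).

(* Harm_0 = Pol_0, Harm_k = Pol_k  /\  Pol_{k-1}^perp  (perp w.r.t.
   (f,g) = 1/n sum f g, i.e. the standard dot product up to 1/n). *)
Definition Harm (k : nat) : 'M[R]_n :=
  match k with
  | 0 => Pol 0
  | k'.+1 => (Pol k :&: kermx (Pol k')^T)%MS
  end.

(* Action of a matrix on functions: (M f)(x) = sum_y M_{x,y} f(y). *)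
Definition mxapp (M : 'M[R]_n) (f : 'rV[R]_n) : 'rV[R]_n := f *m M^T.

Definition is_orthproj (V P : 'M[R]_n) : Prop :=
  forall f : 'rV[R]_n,
    (mxapp P f <= V)%MS /\ (f - mxapp P f) *m V^T = 0.

Definition kappa (al : R) : nat :=
  #|[set p : 'I_n * 'I_n | dot (x p.1) (x p.2) == al]|.

Definition pinner (p r : {poly R}) : R :=
  ((n ^ 2)%:R)^-1 * \sum_(al <- Aset') (kappa al)%:R * p.[al] * r.[al].

Definition predegree (q : nat -> {poly R}) : Prop :=
  (forall k, (k <= sdist)%N -> size (q k) = k.+1) /\
  (forall k h, (k <= sdist)%N -> (h <= sdist)%N ->
     pinner (q k) (q h) = (k == h)%:R * (q k).[m%:R]).

Definition Adj (i : 'I_(size Aset')) : 'M[R]_n :=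
  \matrix_(a < n, b < n) (dot (x a) (x b) == nth 0 Aset' i)%:R.

Definition inBM (M : 'M[R]_n) : Prop :=
  exists c : 'I_(size Aset') -> R, M = \sum_(i < size Aset') c i *: Adj i.

Definition sym_assoc_scheme : Prop :=
  [/\ exists i0, Adj i0 = 1%:M,
      \sum_(i < size Aset') Adj i = const_mx 1,
      forall i, Adj i != 0,
      forall i, (Adj i)^T = Adj i
    & forall i j, inBM (Adj i *m Adj j)].

Definition idem (E : 'M[R]_n) : Prop := E *m E = E.

Definition primitive_idempotents (s : nat) (F : nat -> 'M[R]_n) : Prop :=
  [/\ forall i, (i <= s)%N -> [/\ inBM (F i), idem (F i) & F i != 0],
      forall i j, (i <= s)%N -> (j <= s)%N -> i != j -> F i *m F j = 0,
      \sum_(i < s.+1) F i = 1%:M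
    & forall i, (i <= s)%N ->
        ~ exists E1 E2 : 'M[R]_n,
            [/\ inBM E1, inBM E2, idem E1, idem E2 &
             [/\ E1 != 0, E2 != 0, E1 *m E2 = 0 & E1 + E2 = F i]]].

Definition QPAS (s : nat) (F : nat -> 'M[R]_n) : Prop :=
  [/\ sym_assoc_scheme,
      primitive_idempotents s F
    & forall i, (i <= s)%N -> exists v : {poly R},
        size v = i.+1 /\
        n%:R *: F i = map_mx (fun t => v.[t]) (n%:R *: F 1%N)].

End Defs.

(* Main.v *)
Require Import Defs.
From HB Require Import structures.
From mathcomp Require Import all_boot all_order all_algebra ring.
Import Order.TTheory GRing.Theory Num.Theory.
Local Open Scope ring_scope.
Set Implicit Arguments. Unset Strict Implicit. Unset Printing Implicit Defensive.

Lemma dotC (R : realFieldType) m (u v : 'rV[R]_m) : dot u v = dot v u.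
Proof. by apply: eq_bigr => k _; rewrite mulrC. Qed.

Lemma dot_sub (R : realFieldType) m (u v : 'rV[R]_m) :
  dot (u - v) (u - v) = dot u u + dot v v - (dot u v) *+ 2.
Proof.
rewrite /dot -sumrMnl -big_split /= -sumrB; apply: eq_bigr => k _.
rewrite !mxE; ring.
Qed.

Lemma dot_eq0 (R : realFieldType) m (u : 'rV[R]_m) : dot u u = 0 -> u = 0.
Proof.
move=> /eqP; rewrite psumr_eq0; last by move=> k _; rewrite -expr2 sqr_ge0.
move=> /allP H; apply/rowP => k; rewrite mxE.
have := H k (mem_index_enum k); rewrite /= mulf_eq0 orbb => /eqP //.
Qed.

Lemma sum_nth_ind (R : realFieldType) (s : seq R) (d : R) (g : R -> R) :
  uniq s -> d \in s ->
  \sum_(i < size s) g (nth 0 s i) * (d == nth 0 s i)%:R = g d.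
Proof.
move=> us ds.
rewrite -(big_mkord xpredT (fun i => g (nth 0 s i) * (d == nth 0 s i)%:R)).
rewrite -(big_nth 0 xpredT (fun y => g y * (d == y)%:R)).
rewrite (bigD1_seq d) //= eqxx mulr1 big1 ?addr0 // => y.
by rewrite eq_sym => /negbTE ->; rewrite mulr0.
Qed.

Lemma vec_comb (R : realFieldType) n k (G : 'I_k -> 'M[R]_n) (c : 'I_k -> R) :
  mxvec (\sum_i c i *: G i) = (\row_i c i) *m \matrix_i mxvec (G i).
Proof.
rewrite mulmx_sum_row linear_sum; apply: eq_bigr => i _.
by rewrite linearZ /= mxE rowK.
Qed.

Lemma span_sub (R : realFieldType) n k (G : 'I_k -> 'M[R]_n) M :
  (mxvec M <= \matrix_i mxvec (G i))%MS <-> exists c, M = \sum_i c i *: G i.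
Proof.
split; last by move=> [c ->]; rewrite vec_comb submxMl.
move=> /submxP [D hD]; exists (fun i => D 0 i); apply: (can_inj mxvecK).
rewrite vec_comb hD; congr mulmx; apply/rowP => i; by rewrite mxE.
Qed.
Section S1.
Variables (R : realFieldType) (m n : nat) (x : 'I_n -> 'rV[R]_m).
Hypothesis xinj : injective x.
Hypothesis xnorm : forall a, dot (x a) (x a) = m%:R.

Lemma dot_m a b : dot (x a) (x b) = m%:R -> a = b.
Proof.
move=> h; apply: xinj; apply/eqP; rewrite -subr_eq0; apply/eqP/dot_eq0.
by rewrite dot_sub !xnorm h mulr2n subrr.
Qed.

Lemma memA a b : a != b -> dot (x a) (x b) \in Aset x.
Proof.
move=> ab; rewrite mem_undup; apply/mapP; exists (a, b) => //.
by rewrite mem_enum.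
Qed.

Lemma Aset_ex al : al \in Aset x -> exists a b, a != b /\ dot (x a) (x b) = al.
Proof.
rewrite mem_undup => /mapP [[a b]]; rewrite mem_enum /= => ab ->.
by exists a, b.
Qed.

Lemma m_notin : m%:R \notin Aset x.
Proof.
apply/negP => /Aset_ex [a [b [ab h]]].
by move: ab; rewrite (dot_m h) eqxx.
Qed.

Lemma Aset'E : Aset' x = m%:R :: Aset x.
Proof.
by rewrite /Aset' /= (negbTE m_notin) undup_id // undup_uniq.
Qed.

Lemma size_Aset' : size (Aset' x) = (sdist x).+1.
Proof. by rewrite Aset'E. Qed.

Lemma uniq_Aset' : uniq (Aset' x).
Proof. exact: undup_uniq. Qed.

Lemma memA' a b : dot (x a) (x b) \in Aset' x.
Proof.
rewrite Aset'E inE; case: (eqVneq a b) => [->|ab]; first by rewrite xnorm eqxx.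
by rewrite memA ?orbT.
Qed.

Lemma Aset'_ex al : (0 < n)%N -> al \in Aset' x -> exists a b, dot (x a) (x b) = al.
Proof.
move=> n0; rewrite Aset'E inE => /orP [/eqP ->|].
  by exists (Ordinal n0), (Ordinal n0); rewrite xnorm.
by move=> /Aset_ex [a [b [_ h]]]; exists a, b.
Qed.

Lemma mx_decomp (g : R -> R) :
  \matrix_(a, b) g (dot (x a) (x b)) =
  \sum_(i < size (Aset' x)) g (nth 0 (Aset' x) i) *: @Adj _ _ _ x i.
Proof.
apply/matrixP => a b; rewrite mxE summxE.
rewrite -(sum_nth_ind g uniq_Aset' (memA' a b)).
by apply: eq_bigr => i _; rewrite !mxE.
Qed.

End S1.

Section Proj.
Variables (R : realFieldType) (n : nat).
Implicit Types (u g f : 'rV[R]_n).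

Lemma mulmx_tr_dot (u v : 'rV[R]_n) : (u *m v^T) 0 0 = dot u v.
Proof. by rewrite mxE; apply: eq_bigr => k _; rewrite mxE. Qed.

Lemma orth_self p (V : 'M[R]_(p, n)) u : (u <= V)%MS -> u *m V^T = 0 -> u = 0.
Proof.
move=> /submxP [D ->] h; apply: dot_eq0; rewrite -mulmx_tr_dot.
by rewrite trmx_mul mulmxA h mul0mx mxE.
Qed.

Lemma subB_mx p (A B : 'M[R]_(p, n)) p' (C : 'M[R]_(p', n)) :
  (A <= C)%MS -> (B <= C)%MS -> (A - B <= C)%MS.
Proof. by move=> a b; apply: addmx_sub => //; rewrite eqmx_opp. Qed.

Lemma projA (V P : 'M[R]_n) g : is_orthproj V P -> (g <= V)%MS -> g *m P^T = g.
Proof.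
move=> /(_ g) [h1 h2] gV; apply/eqP; rewrite eq_sym -subr_eq0; apply/eqP.
by apply: (orth_self (V := V)) => //; apply: subB_mx.
Qed.

Lemma projC p (V : 'M[R]_(p, n)) (W P : 'M[R]_n) g :
  V *m W^T = 0 -> is_orthproj W P -> (g <= V)%MS -> g *m P^T = 0.
Proof.
move=> VW /(_ g) [h1 h2] /submxP [D gE].
apply: (orth_self (V := W)) => //.
have : g *m W^T = 0 by rewrite gE -mulmxA VW mulmx0.
by move: h2; rewrite mulmxBl => /eqP; rewrite subr_eq0 => /eqP <-.
Qed.

Lemma mx_rowsP (A B : 'M[R]_n) : (forall f, f *m A = f *m B) -> A = B.
Proof. by move=> h; apply/row_matrixP => i; rewrite !rowE h. Qed.

End Proj.

Section PolS.
Variables (R : realFieldType) (m n : nat) (x : 'I_n -> 'rV[R]_m).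

Lemma Pol_mono k : (Pol x k <= Pol x k.+1)%MS.
Proof.
apply/row_subP => j /=.
apply: (sumsmx_sup (0 : 'I_(1 + m))) => //.
apply: (sumsmx_sup j) => //; rewrite genmxE.
set r := map2_mx _ _ _.
suff -> : r = row j (Pol x k) by [].
apply/rowP => c; rewrite /r !mxE /Pol1gen.
case: splitP => [i _|i /= h]; last by [].
by rewrite mxE mul1r.
Qed.

Lemma Pol_le i j : (i <= j)%N -> (Pol x i <= Pol x j)%MS.
Proof.
elim: j => [|j IH]; first by rewrite leqn0 => /eqP ->.
rewrite leq_eqVlt => /orP [/eqP ->//|]; rewrite ltnS => /IH h.
exact: submx_trans h (Pol_mono j).
Qed.

Lemma Harm_sub i : (Harm x i <= Pol x i)%MS.
Proof. by case: i => [|i] //=; exact: capmxSl. Qed.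

Lemma Harm_orth_lt i j : (i < j)%N -> Harm x j *m (Harm x i)^T = 0.
Proof.
case: j => [//|j]; rewrite ltnS => ij.
have /submxP [D ->] : (Harm x i <= Pol x j)%MS.
  exact: submx_trans (Harm_sub i) (Pol_le ij).
have /sub_kermxP h : (Harm x j.+1 <= kermx (Pol x j)^T)%MS by exact: capmxSr.
by rewrite trmx_mul mulmxA h mul0mx.
Qed.

Lemma Harm_orth i j : i != j -> Harm x j *m (Harm x i)^T = 0.
Proof.
move=> ne; case: (ltngtP i j) ne => [ij|ji|->]; [by move=> _; exact: Harm_orth_lt|move=> _|by []].
by apply: trmx_inj; rewrite trmx_mul trmxK Harm_orth_lt // trmx0.
Qed.

End PolS.

Section Main.
Variables (R : realFieldType) (m n : nat) (x : 'I_n -> 'rV[R]_m)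
  (q : nat -> {poly R}) (F : nat -> 'M[R]_n).
Hypothesis xinj : injective x.
Hypothesis xnorm : forall a, dot (x a) (x a) = m%:R.
Hypothesis n0 : (0 < n)%N.
Hypothesis Hdeg : degree_is x (sdist x).
Hypothesis Hpre : predegree x q.
Hypothesis Hproj : forall i, (i <= sdist x)%N -> is_orthproj (Harm x i) (F i).
Hypothesis HF : forall i, (i <= sdist x)%N ->
     (n%:R)^-1 *: map_mx (fun t => (q i).[t]) (nG x) = F i.

Local Notation s := (sdist x).

Lemma FE i a b : (i <= s)%N -> F i a b = (n%:R)^-1 * (q i).[dot (x a) (x b)].
Proof. by move=> hi; rewrite -HF // !mxE. Qed.

Lemma FT i : (i <= s)%N -> (F i)^T = F i.
Proof. by move=> hi; apply/matrixP => a b; rewrite mxE !FE // dotC. Qed.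

Lemma F_inBM i : (i <= s)%N -> inBM x (F i).
Proof.
move=> hi; exists (fun j => (n%:R)^-1 * (q i).[nth 0 (Aset' x) j]).
rewrite -HF //.
have -> : map_mx (fun t => (q i).[t]) (nG x) =
          \matrix_(a, b) (fun t => (q i).[t]) (dot (x a) (x b)).
  by apply/matrixP => a b; rewrite !mxE.
rewrite (mx_decomp xinj xnorm) scaler_sumr; apply: eq_bigr => j _.
by rewrite scalerA.
Qed.

Lemma F_idem i : (i <= s)%N -> F i *m F i = F i.
Proof.
move=> hi; apply: mx_rowsP => f; rewrite mulmxA.
have h := (Hproj hi f).1; rewrite /mxapp FT // in h.
by rewrite -{2}(FT hi) (projA (Hproj hi) h).
Qed.

Lemma F_orth i j : (i <= s)%N -> (j <= s)%N -> i != j -> F i *m F j = 0.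
Proof.
move=> hi js ij; apply: mx_rowsP => f; rewrite mulmxA mulmx0.
have h := (Hproj hi f).1; rewrite /mxapp FT // in h.
rewrite -(FT js); apply: (projC _ (Hproj js) h).
by apply: Harm_orth; rewrite eq_sym.
Qed.

Lemma F_neq0 i : (i <= s)%N -> F i != 0.
Proof.
move=> hi; apply/eqP => Fi0.
have qn0 : q i != 0 by rewrite -size_poly_eq0 (Hpre.1 i hi).
suff /(max_poly_roots qn0) : all (root (q i)) (Aset' x).
  move=> /(_ (uniq_Aset' x)); rewrite (size_Aset' xinj xnorm) (Hpre.1 i hi) ltnS => h.
  by rewrite ltnNge hi in h.
apply/allP => al /(Aset'_ex xinj xnorm n0) [a [b <-]].
move: Fi0 => /matrixP /(_ a b); rewrite FE // mxE => /eqP.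
rewrite mulf_eq0 invr_eq0 pnatr_eq0 eqn0Ngt n0 /= => /eqP h.
by apply/eqP.
Qed.


Lemma ordle k (i : 'I_k.+1) : (k <= s)%N -> (i <= s)%N.
Proof. by move=> ks; rewrite (leq_trans _ ks) // -ltnS. Qed.

Definition Sk k := \sum_(i < k.+1) F i.

Lemma SkT k : (k <= s)%N -> (Sk k)^T = Sk k.
Proof.
move=> ks; apply/matrixP => a b; rewrite mxE !summxE; apply: eq_bigr => i _.
by rewrite -[in RHS](FT (ordle i ks)) mxE.
Qed.

Lemma SkF k : (k < s)%N -> Sk k *m F k.+1 = 0.
Proof.
move=> ks; rewrite /Sk mulmx_suml big1 // => i _.
apply: F_orth => //; first by rewrite (ordle i) // ltnW.
by rewrite neq_ltn ltn_ord.
Qed.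

Lemma Sk_idem k : (k <= s)%N -> Sk k *m Sk k = Sk k.
Proof.
move=> ks; rewrite {1}/Sk mulmx_suml; apply: eq_bigr => i _.
have his : (i <= s)%N by rewrite (ordle i).
rewrite /Sk mulmx_sumr (bigD1 i) //= F_idem // big1 ?addr0 // => j ji.
apply: F_orth => //; first by rewrite (ordle j).
by rewrite eq_sym.
Qed.

Lemma sub_rows p (A : 'M[R]_(p, n)) (B : 'M[R]_n) :
  (forall g : 'rV_n, (g <= A)%MS -> g *m B = g) -> A *m B = A.
Proof. by move=> h; apply/row_matrixP => i; rewrite row_mul h // row_sub. Qed.

Lemma Sk_Pol k : (k <= s)%N -> forall g : 'rV[R]_n, (g <= Pol x k)%MS -> g *m Sk k = g.
Proof.
elim: k => [_ g|k IH ks g gP].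
  rewrite /Sk big_ord1 => gP.
  by rewrite -(FT (leq0n _)); apply: (projA (Hproj (leq0n _))).
have ks' : (k <= s)%N by apply: ltnW.
have IHm : Pol x k *m Sk k = Pol x k := sub_rows (IH ks').
set h := g - g *m Sk k.
have hH : (h <= Harm x k.+1)%MS.
  rewrite sub_capmx; apply/andP; split.
    apply: subB_mx => //; rewrite /Sk mulmx_sumr; apply: summx_sub => i _.
    have his : (i <= s)%N by rewrite (ordle i).
    have := (Hproj his g).1; rewrite /mxapp FT // => hg.
    apply: submx_trans hg _; apply: submx_trans (Harm_sub x i) _.
    by apply: Pol_le; exact: ltnW (ltn_ord i).
  apply/sub_kermxP; rewrite -IHm trmx_mul SkT // mulmxA.
  by rewrite /h mulmxBl -mulmxA Sk_idem // subrr mul0mx.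
have hF : h *m F k.+1 = h by rewrite -(FT ks) (projA (Hproj ks)).
rewrite /Sk big_ord_recr /= -/(Sk k) mulmxDr.
have : g *m F k.+1 = h by rewrite -hF /h mulmxBl -mulmxA SkF // mulmx0 subr0.
by move=> ->; rewrite /h addrC subrK.
Qed.

Lemma sumF : \sum_(i < s.+1) F i = 1%:M.
Proof.
apply: mx_rowsP => f; rewrite mulmx1.
by apply: (Sk_Pol (leqnn _)); apply: submx_full; exact: Hdeg.1.
Qed.


Definition AdjM := \matrix_(i < size (Aset' x)) mxvec (@Adj _ _ _ x i).
Definition FM := \matrix_(i < s.+1) mxvec (F i).

Lemma inBM_sub M : inBM x M <-> (mxvec M <= AdjM)%MS.
Proof. by rewrite span_sub. Qed.

Lemma combF (c : 'I_s.+1 -> R) (j : 'I_s.+1) :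
  (\sum_i c i *: F i) *m F j = c j *: F j.
Proof.
have js : (j <= s)%N by rewrite -ltnS.
rewrite mulmx_suml (bigD1 j) //= -scalemxAl F_idem // big1 ?addr0 // => i ij.
rewrite -scalemxAl F_orth ?scaler0 //; by rewrite -ltnS.
Qed.

Lemma FM_free : row_free FM.
Proof.
apply: inj_row_free => v hv.
have : \sum_i v 0 i *: F i = 0.
  apply: (can_inj mxvecK); rewrite vec_comb linear0.
  by rewrite -hv; congr mulmx; apply/rowP => i; rewrite mxE.
move=> h0; apply/rowP => j; rewrite [in RHS]mxE.
have := combF (fun i => v 0 i) j; rewrite h0 mul0mx => /esym /eqP.
rewrite scaler_eq0 (negbTE (F_neq0 _)) ?orbF; last by rewrite -ltnS.
by move=> /eqP.
Qed.

Lemma FM_le : (FM <= AdjM)%MS.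
Proof.
apply/row_subP => i; rewrite rowK -inBM_sub; apply: F_inBM.
by rewrite -ltnS.
Qed.

Lemma AdjM_le : (AdjM <= FM)%MS.
Proof.
have [le eqC] := mxrank_leqif_sup FM_le.
rewrite -eqC; apply/eqP/anti_leq; rewrite le /=.
apply: leq_trans (rank_leq_row AdjM) _; rewrite (size_Aset' xinj xnorm).
by have /eqP -> := FM_free.
Qed.

Lemma BM_F M : inBM x M -> exists c : 'I_s.+1 -> R, M = \sum_i c i *: F i.
Proof. by move=> /inBM_sub h; apply/span_sub; exact: submx_trans h AdjM_le. Qed.

Lemma F_BM (c : 'I_s.+1 -> R) : inBM x (\sum_i c i *: F i).
Proof.
apply/inBM_sub; apply: submx_trans FM_le.
by apply/span_sub; exists c.
Qed.

Lemma BM_mul M N : inBM x M -> inBM x N -> inBM x (M *m N).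
Proof.
move=> /BM_F [c ->] /BM_F [d ->].
have -> : (\sum_i c i *: F i) *m (\sum_i d i *: F i) = \sum_i (c i * d i) *: F i.
  rewrite mulmx_sumr; apply: eq_bigr => i _.
  by rewrite -scalemxAr combF scalerA mulrC.
exact: F_BM.
Qed.


Lemma Adj_BM (i : 'I_(size (Aset' x))) : inBM x (Adj i).
Proof. by apply/inBM_sub; rewrite -(rowK (fun j => mxvec (Adj j)) i) row_sub. Qed.

Lemma sas : sym_assoc_scheme x.
Proof.
have sz : (0 < size (Aset' x))%N by rewrite (size_Aset' xinj xnorm).
split.
- have nth0 : nth 0 (Aset' x) (Ordinal sz) = m%:R by rewrite /= Aset'E.
  exists (Ordinal sz); apply/matrixP => a b; rewrite !mxE nth0.
  case: (eqVneq a b) => [->|ab]; first by rewrite xnorm eqxx.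
  case: eqP => // /(dot_m xinj xnorm) ab'; by rewrite ab' eqxx in ab.
- have := mx_decomp xinj xnorm (fun _ => 1).
  under eq_bigr do rewrite scale1r.
  move=> <-; by apply/matrixP => a b; rewrite !mxE.
- move=> i; have /(Aset'_ex xinj xnorm n0) [a [b h]] : nth 0 (Aset' x) i \in Aset' x.
    exact: mem_nth.
  apply/eqP => /matrixP /(_ a b); rewrite !mxE h eqxx => /eqP.
  by rewrite oner_eq0.
- by move=> i; apply/matrixP => a b; rewrite !mxE dotC.
- move=> i j; apply: BM_mul; exact: Adj_BM.
Qed.

Lemma scale_idem (c : R) i : (i <= s)%N -> c *: F i *m (c *: F i) = c *: F i ->
  c *: F i != 0 -> c = 1.
Proof.
move=> hi; rewrite -scalemxAl -scalemxAr F_idem // scalerA => /eqP.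
rewrite -subr_eq0 -scalerBl scaler_eq0 (negbTE (F_neq0 hi)) orbF subr_eq0.
rewrite scaler_eq0 (negbTE (F_neq0 hi)) orbF => /eqP h cn0.
by apply: (mulfI cn0); rewrite mulr1.
Qed.

Lemma piece i E1 E2 : (i <= s)%N -> inBM x E1 -> idem E1 -> E1 *m E2 = 0 ->
  E1 + E2 = F i -> E1 != 0 -> E1 = F i.
Proof.
move=> hi /BM_F [c hc] id12 h12 hsum nz.
have iI : (i < s.+1)%N by [].
have E1E : E1 = c (Ordinal iI) *: F i.
  rewrite -[LHS]id12 {2}(_ : E1 = F i - E2); last by rewrite -hsum addrK.
  rewrite mulmxBr h12 subr0 {1}hc.
  exact: (combF c (Ordinal iI)).
have c1 : c (Ordinal iI) = 1.
  apply: (scale_idem hi); rewrite -E1E //; exact: id12.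
by rewrite E1E c1 scale1r.
Qed.

Lemma prim : primitive_idempotents x s F.
Proof.
split.
- by move=> i hi; split; [exact: F_inBM|exact: F_idem|exact: F_neq0].
- exact: F_orth.
- exact: sumF.
- move=> i hi [E1 [E2 [b1 b2 i1 i2 [n1 n2 h12 hs]]]].
  have e1 := piece hi b1 i1 h12 hs n1.
  move: n2; rewrite -[E2](addKr E1) hs e1 addNr eqxx //.
Qed.

Lemma nFE j a b : (j <= s)%N -> (n%:R *: F j) a b = (q j).[dot (x a) (x b)].
Proof.
move=> hj; rewrite mxE FE // mulrA mulfV ?mul1r //.
by rewrite pnatr_eq0 eqn0Ngt n0.
Qed.

Lemma polyclause i : (i <= s)%N -> exists v : {poly R},
  size v = i.+1 /\ n%:R *: F i = map_mx (fun t => v.[t]) (n%:R *: F 1%N).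
Proof.
move=> hi; case: (posnP i) => [i0|ipos].
  subst i; exists (q 0); split; first exact: Hpre.1.
  have qc : q 0 = ((q 0)`_0)%:P by apply: size1_polyC; rewrite (Hpre.1 0 hi).
  by apply/matrixP => a b; rewrite nFE // mxE qc !hornerC.
have h1 : (1 <= s)%N by apply: leq_trans hi.
have sq1 : size (q 1) = 2 by exact: Hpre.1.
set a1 := (q 1)`_1; set b1 := (q 1)`_0.
have a1n0 : a1 != 0.
  by have := lead_coef_eq0 (q 1); rewrite lead_coefE sq1 -size_poly_eq0 sq1 /= => ->.
have q1E t : (q 1).[t] = a1 * t + b1.
  rewrite horner_coef sq1 big_ord_recl big_ord1 /= expr0 mulr1 expr1.
  by rewrite addrC mulrC.
set r := a1^-1 *: ('X - b1%:P).
have sr : size r = 2 by rewrite size_scale ?invr_eq0 // size_XsubC.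
exists (q i \Po r); split; first by rewrite size_comp_poly2 // Hpre.1.
apply/matrixP => a b; rewrite nFE // mxE nFE // horner_comp.
congr horner; rewrite q1E /r hornerZ !hornerE addrK mulKf //.
Qed.

End Main.

Lemma n_pos (R : realFieldType) m n (x : 'I_n -> 'rV[R]_m) :
  sph2design x -> (0 < n)%N.
Proof.
move=> H; rewrite lt0n; apply/negP => /eqP n0.
have := H 1 0 0; rewrite big1; last by move=> i; have := ltn_ord i; rewrite {2}n0.
by rewrite mulr0 mxtrace0 addr0 => /eqP; rewrite eq_sym oner_eq0.
Qed.

Theorem lemma3p6 (R : realFieldType) (m n : nat) (x : 'I_n -> 'rV[R]_m)
    (q : nat -> {poly R}) (F : nat -> 'M[R]_n) :
  (1 <= m)%N ->
  injective x ->
  (forall a, dot (x a) (x a) = m%:R) ->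
  sph2design x ->
  degree_is x (sdist x) ->
  predegree x q ->
  (forall i, (i <= sdist x)%N -> is_orthproj (Harm x i) (F i)) ->
  (forall i, (i <= sdist x)%N ->
     (n%:R)^-1 *: map_mx (fun t => (q i).[t]) (nG x) = F i) ->
  QPAS x (sdist x) F.
Proof.
move=> _ xinj xnorm Hd Hdeg Hpre Hproj HF.
have n0 := n_pos Hd.
split.
- exact: (sas xinj xnorm n0 Hpre Hproj HF).
- exact: (prim xinj xnorm n0 Hdeg Hpre Hproj HF).
- exact: (polyclause n0 Hpre HF).
Qed.
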